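(* Let $\mathfrak{G}$ be a Lie algebra over $\mathbb{K}$ and $I\subseteq\mathfrak{G}$ an ideal. Let $U$ and $U'$ be $\mathfrak{G}/I$-modules (regarded as $\mathfrak{G}$-modules), and let $W$ be a $\mathfrak{G}$-module on which $I$ acts densely and irreducibly with $\mathrm{End}_I(W)=\mathbb{K}$. Then every $\mathfrak{G}$-module homomorphism $U\otimes W\to U'\otimes W$ is of the form $g\otimes\mathrm{id}_W$ for a unique $g\in\mathrm{Hom}_{\mathfrak{G}}(U,U')$; that is, $\mathrm{Hom}_{\mathfrak{G}}(U\otimes W,U'\otimes W)=\mathrm{Hom}_{\mathfrak{G}}(U,U')$.
   Context: A Lie subalgebra $I$ of a Lie algebra $\mathfrak{G}$ acts densely on a $\mathfrak{G}$-module $W$ if for every finite set $\{w_1,\dots,w_n\}\subset W$ and every $h\in\mathfrak{G}$ there is $h'\in I$ with $h'w_i=hw_i$ for all $i$. $\mathbb{K}$ is a field of characteristic $0$. *)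

(* Defs.v *)
From HB Require Import structures.
From mathcomp Require Import all_boot all_order all_algebra.
Set Implicit Arguments. Unset Strict Implicit. Unset Printing Implicit Defensive.
Import GRing.Theory.
Local Open Scope ring_scope.

Definition is_lie_bracket (K : fieldType) (G : lmodType K) (br : G -> G -> G) : Prop :=
  [/\ forall x, br x x = 0,
      forall a x y z, br (a *: x + y) z = a *: br x z + br y z,
      forall a x y z, br z (a *: x + y) = a *: br z x + br z y
    & forall x y z, br x (br y z) + br y (br z x) + br z (br x y) = 0].

Definition is_linear (K : fieldType) (V V' : lmodType K) (f : V -> V') : Prop :=
  forall a u v, f (a *: u + v) = a *: f u + f v.

Definition is_bilinear (K : fieldType) (U W V : lmodType K) (b : U -> W -> V) : Prop :=
  (forall w, is_linear (fun u => b u w)) /\ (forall u, is_linear (b u)).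

Definition is_lie_module (K : fieldType) (G : lmodType K) (br : G -> G -> G)
    (V : lmodType K) (act : G -> V -> V) : Prop :=
  [/\ forall v, is_linear (fun x => act x v),
      forall x, is_linear (act x)
    & forall x y v, act (br x y) v = act x (act y v) - act y (act x v)].

Definition is_ideal (K : fieldType) (G : lmodType K) (br : G -> G -> G) (I : {pred G}) : Prop :=
  [/\ 0 \in I,
      forall a x y, x \in I -> y \in I -> a *: x + y \in I
    & forall x y, y \in I -> br x y \in I].

(* A G-module on which I acts trivially, i.e. a G/I-module regarded as a G-module. *)
Definition is_quotient_module (K : fieldType) (G : lmodType K) (br : G -> G -> G)
    (I : {pred G}) (V : lmodType K) (act : G -> V -> V) : Prop :=
  is_lie_module br act /\ (forall x v, x \in I -> act x v = 0).

Definition is_module_hom (K : fieldType) (G : lmodType K) (V V' : lmodType K)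
    (act : G -> V -> V) (act' : G -> V' -> V') (f : V -> V') : Prop :=
  is_linear f /\ (forall x v, f (act x v) = act' x (f v)).

Definition acts_densely (K : fieldType) (G : lmodType K) (I : {pred G})
    (W : lmodType K) (act : G -> W -> W) : Prop :=
  forall (ws : seq W) (h : G), exists2 h', h' \in I & forall w, w \in ws -> act h' w = act h w.

Definition acts_irreducibly (K : fieldType) (G : lmodType K) (I : {pred G})
    (W : lmodType K) (act : G -> W -> W) : Prop :=
  (exists w : W, w != 0) /\
  forall S : {pred W},
    0 \in S -> (forall a u v, u \in S -> v \in S -> a *: u + v \in S) ->
    (forall x w, x \in I -> w \in S -> act x w \in S) ->
    (forall w, w \in S -> w = 0) \/ (forall w, w \in S).

Definition endI_scalar (K : fieldType) (G : lmodType K) (I : {pred G})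
    (W : lmodType K) (act : G -> W -> W) : Prop :=
  forall f : W -> W, is_linear f -> (forall x w, x \in I -> f (act x w) = act x (f w)) ->
    exists c : K, forall w, f w = c *: w.

Definition is_tensor_product (K : fieldType) (U W T : lmodType K) (t : U -> W -> T) : Prop :=
  is_bilinear t /\
  forall (V : lmodType K) (b : U -> W -> V), is_bilinear b ->
    exists! f : T -> V, is_linear f /\ forall u w, f (t u w) = b u w.

Definition is_tensor_action (K : fieldType) (G : lmodType K) (U W T : lmodType K)
    (t : U -> W -> T) (actU : G -> U -> U) (actW : G -> W -> W) (actT : G -> T -> T) : Prop :=
  (forall x, is_linear (actT x)) /\
  forall x u w, actT x (t u w) = t (actU x u) w + t u (actW x w).

(* Main.v *)
Require Import Defs.
From HB Require Import structures.
From mathcomp Require Import all_boot all_order all_algebra.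
From mathcomp Require Import boolp classical_sets.
Set Implicit Arguments. Unset Strict Implicit.
Import GRing.Theory.
Local Open Scope ring_scope.
Local Open Scope classical_set_scope.


Definition PG (K : fieldType) (V : lmodType K) (A : set (V * K)) :=
  [/\ A (0, 0), (forall x a b, A (x, a) -> A (x, b) -> a = b)
    & (forall c x a y b, A (x, a) -> A (y, b) -> A (c *: x + y, c * a + b))].

Definition extg (K : fieldType) (V : lmodType K) (A : set (V * K)) (x : V) (d : K) : set (V * K) :=
  fun p => exists y b c, A (y, b) /\ p = (y + c *: x, b + c * d).

Lemma extg_PG (K : fieldType) (V : lmodType K) (A : set (V * K)) (x : V) (d : K) :
  PG A -> (forall a, ~ A (x, a)) ->
  [/\ PG (extg A x d), A `<=` extg A x d & extg A x d (x, d)].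
Proof.
move=> [A0 Af Ac] nx; split.
- split.
  + by exists 0, 0, 0; split => //; rewrite scale0r addr0 mul0r addr0.
  + move=> z a b [y1 [b1 [c1 [H1 [-> ->]]]]] [y2 [b2 [c2 [H2 []]]]].
    move=> E ->.
    have [c12|c12] := eqVneq c1 c2.
      subst c2; move/addIr: E => E; subst y2.
      by rewrite (Af _ _ _ H1 H2).
    exfalso; apply: (nx ((c1 - c2)^-1 * (-1 * b1 + b2) + 0)).
    have -> : x = (c1 - c2)^-1 *: ((-1) *: y1 + y2) + 0.
      rewrite addr0 scaleN1r; apply: (@scalerI _ _ (c1 - c2)); first by rewrite subr_eq0.
      rewrite scalerA mulfV ?subr_eq0 // scale1r scalerBl.
      by apply: (addIr (c2 *: x)); rewrite subrK -addrA -E addKr.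
    by apply: (Ac _ _ _ _ _ _ A0); apply: Ac.
  + move=> c z a w b [y1 [b1 [c1 [H1 [-> ->]]]]] [y2 [b2 [c2 [H2 [-> ->]]]]].
    exists (c *: y1 + y2), (c * b1 + b2), (c * c1 + c2); split; first exact: Ac.
    congr pair.
      by rewrite scalerDr scalerA scalerDl addrACA.
    by rewrite mulrDr mulrA mulrDl addrACA.
- case=> y b Hy; exists y, b, 0; split => //.
  by rewrite scale0r addr0 mul0r addr0.
- exists 0, 0, 1; split => //.
  by rewrite add0r scale1r add0r mul1r.
Qed.

Lemma ext_functional (K : fieldType) (V : lmodType K) (S : V -> Prop) (v : V) :
  S 0 -> (forall a u w, S u -> S w -> S (a *: u + w)) -> ~ S v ->
  exists f : V -> K, [/\ (forall a u w, f (a *: u + w) = a * f u + f w),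
     (forall s, S s -> f s = 0) & f v = 1].
Proof.
move=> S0 Sc nSv.
pose Gr (A : set (V * K)) := [/\ PG A, (forall s, S s -> A (s, 0)) & A (v, 1)].
pose GS : set (V * K) := fun p => S p.1 /\ p.2 = 0.
have PGS : PG GS.
  split; first by split.
  - by move=> x a b [_ /= ->] [_ /= ->].
  - move=> c x a y b [Sx /= ->] [Sy /= ->]; split; first exact: Sc.
    by rewrite /= mulr0 addr0.
have [PB0 sB0 B0v] := extg_PG 1 PGS (fun a => fun H => nSv (proj1 H)).
have GB0 : Gr (extg GS v 1).
  split => // s Ss; apply: sB0.
  by split.
have nonempty (X : set (V * K)) p : X p -> X <> set0.
  by move=> Xp X0; rewrite X0 in Xp.
have [|A [PA Amax]] := @Zorn_bigcup _ (fun A => Gr A \/ A = set0).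
  move=> F FP Ftot.
  have [[B [FB Bn]]|nB] := pselect (exists B, F B /\ B <> set0); last first.
    right; apply/seteqP; split => // p [X FX Xp].
    by exfalso; apply: nB; exists X; split => //; exact: nonempty Xp.
  have GrF X p : F X -> X p -> Gr X.
    by move=> FX Xp; case: (FP X FX) => // X0; exfalso; exact: nonempty Xp X0.
  have [[B0 Bf Bc] BS Bv] : Gr B.
    by case: (FP B FB) => // X0; exfalso; exact: Bn.
  left; split.
  - split.
    + by exists B.
    + move=> x a b [X1 FX1 H1] [X2 FX2 H2].
      have [S12|S21] := Ftot X1 X2 FX1 FX2.
        have [[_ f _] _ _] := GrF X2 _ FX2 H2; exact: f (S12 _ H1) H2.
      have [[_ f _] _ _] := GrF X1 _ FX1 H1; exact: f H1 (S21 _ H2).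
    + move=> c x a y b [X1 FX1 H1] [X2 FX2 H2].
      have [S12|S21] := Ftot X1 X2 FX1 FX2.
        exists X2 => //; have [[_ _ f] _ _] := GrF X2 _ FX2 H2; exact: f (S12 _ H1) H2.
      exists X1 => //; have [[_ _ f] _ _] := GrF X1 _ FX1 H1; exact: f H1 (S21 _ H2).
  - by move=> s Ss; exists B => //; exact: BS.
  - by exists B.
have GA : Gr A.
  case: PA => // A0; exfalso; apply: (Amax (extg GS v 1)); last by left.
  rewrite A0; split => // H; exact: (H _ B0v).
have [[A00 Af Ac] AS Av] := GA.
have tot x : exists a, A (x, a).
  apply/not_existsP => nx'.
  have [PE sE Ex] := extg_PG 0 (And3 A00 Af Ac) nx'.
  have HP : Gr (extg A x 0).
    by split => //; [move=> s Ss; apply: sE; exact: AS | exact: sE _ Av].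
  apply: (Amax _ _ (or_introl HP)).
  split => // H; exact: nx' (H _ Ex).
pose f x := projT1 (cid (tot x)).
have Hf x : A (x, f x) := projT2 (cid (tot x)).
exists f; split.
- by move=> a u w; apply: (Af _ _ _ (Hf _)); apply: Ac; apply: Hf.
- by move=> s Ss; apply: (Af _ _ _ (Hf _)); apply: AS.
- by apply: (Af _ _ _ (Hf _)).
Qed.

Lemma lin0 (K : fieldType) (V V' : lmodType K) (f : V -> V') : is_linear f -> f 0 = 0.
Proof.
move=> H; have := H 1 0 0; rewrite !scale1r addr0 => /eqP.
by rewrite -subr_eq subrr => /eqP <-.
Qed.

Lemma linD (K : fieldType) (V V' : lmodType K) (f : V -> V') u w : is_linear f ->
  f (u + w) = f u + f w.
Proof. by move=> H; have := H 1 u w; rewrite !scale1r. Qed.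

Lemma linZ (K : fieldType) (V V' : lmodType K) (f : V -> V') a u : is_linear f ->
  f (a *: u) = a *: f u.
Proof. by move=> H; have := H a u 0; rewrite !addr0 (lin0 H) addr0. Qed.

Lemma lin_sum (K : fieldType) (V V' : lmodType K) (f : V -> V') (I : Type) (l : seq I) (F : I -> V) :
  is_linear f -> f (\sum_(i <- l) F i) = \sum_(i <- l) f (F i).
Proof.
move=> H; elim: l => [|i l IH]; first by rewrite !big_nil (lin0 H).
by rewrite !big_cons (linD _ _ H) IH.
Qed.

Lemma lin_comp (K : fieldType) (V1 V2 V3 : lmodType K) (f : V2 -> V3) (g : V1 -> V2) :
  is_linear f -> is_linear g -> is_linear (fun x => f (g x)).
Proof. by move=> Hf Hg a u v; rewrite Hg Hf. Qed.

Lemma text (K : fieldType) (U W T V : lmodType K) (t : U -> W -> T) (f1 f2 : T -> V) :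
  is_tensor_product t -> is_linear f1 -> is_linear f2 ->
  (forall u w, f1 (t u w) = f2 (t u w)) -> f1 = f2.
Proof.
move=> [[tl tr] tu] H1 H2 E.
have bil : is_bilinear (fun u w => f1 (t u w)).
  split=> [w|u] a x y /=; first by rewrite (tl w) H1.
  by rewrite (tr u) H1.
have [f [_ uf]] := tu V _ bil.
rewrite -(uf f1) ?(uf f2) //; split => // u w; by rewrite E.
Qed.

Lemma span_pure (K : fieldType) (U W T : lmodType K) (t : U -> W -> T) :
  is_tensor_product t -> forall x : T, exists l : seq (U * W), x = \sum_(p <- l) t p.1 p.2.
Proof.
move=> hT x; have [[tl tr] _] := hT.
have tZ u w a : t (a *: u) w = a *: t u w := linZ a u (tl w).
case: (pselect (exists l : seq (U * W), x = \sum_(p <- l) t p.1 p.2)) => // nS; exfalso.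
have [|lam [laml lamS lamx]] := @ext_functional K T
   (fun x => exists l : seq (U * W), x = \sum_(p <- l) t p.1 p.2) x
   (ex_intro _ [::] (esym (big_nil _ _ _ _))) _ nS.
  move=> a u v [l1 ->] [l2 ->].
  exists ([seq (a *: p.1, p.2) | p <- l1] ++ l2).
  rewrite big_cat big_map scaler_sumr; congr (_ + _).
  by apply: eq_bigr => p _ /=; rewrite tZ.
have lin : @is_linear K T K^o lam by exact: laml.
have lin0' : @is_linear K T K^o (fun _ => 0).
  by move=> a u v; rewrite /= scaler0 addr0.
have E : lam = (fun _ => 0).
  apply: (text hT lin lin0') => u w; apply: lamS.
  by exists [:: (u, w)]; rewrite big_seq1.
by move: lamx; rewrite E => /esym /eqP; rewrite oner_eq0.
Qed.

Lemma lin_sumP (K : fieldType) (V V' : lmodType K) (f : V -> V') (I : Type) (l : seq I) (P : pred I) (F : I -> V) :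
  is_linear f -> f (\sum_(i <- l | P i) F i) = \sum_(i <- l | P i) f (F i).
Proof. by move=> H; rewrite -big_filter (lin_sum _ _ H) big_filter. Qed.

Lemma sep_seq (K : fieldType) (U W T : lmodType K) (t : U -> W -> T) : is_bilinear t ->
  forall (X : seq W) (l : seq (U * W)), (forall p, p \in l -> p.2 \in X) ->
  (forall f : U -> K, (forall a u v, f (a *: u + v) = a * f u + f v) ->
     \sum_(p <- l) f p.1 *: p.2 = 0) ->
  \sum_(p <- l) t p.1 p.2 = 0.
Proof.
move=> [tl tr].
have tZ u w a : t (a *: u) w = a *: t u w := linZ a u (tl w).
have tZr u w a : t u (a *: w) = a *: t u w := linZ a w (tr u).
have t0w w : t 0 w = 0 := lin0 (tl w).
have tsuml (I : Type) (s : seq I) (F : I -> U) w :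
   t (\sum_(i <- s) F i) w = \sum_(i <- s) t (F i) w := lin_sum s F (tl w).
have tsumr (I : Type) (s : seq I) (F : I -> W) u :
   t u (\sum_(i <- s) F i) = \sum_(i <- s) t u (F i) := lin_sum s F (tr u).
elim=> [|x X IH] l Hl Hf.
  case: l Hl {Hf} => [|p l] Hl; first by rewrite big_nil.
  by have := Hl p (mem_head _ _).
set A := \sum_(p <- l | p.2 == x) p.1.
set lr := [seq p <- l | p.2 != x].
have splitl (M : zmodType) (G : U * W -> M) :
    \sum_(p <- l) G p = \sum_(p <- l | p.2 == x) G p + \sum_(p <- lr) G p.
  by rewrite (bigID (fun p => p.2 == x)) /= big_filter.
have hx1 : \sum_(p <- l | p.2 == x) t p.1 p.2 = t A x.
  rewrite (eq_bigr (fun p => t p.1 x)) => [|p /eqP -> //].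
  by rewrite /A (lin_sumP _ _ _ (tl x)).
have hx2 f : (forall a u v, f (a *: u + v) = a * f u + f v) ->
    \sum_(p <- l | p.2 == x) f p.1 *: p.2 = f A *: x.
  move=> fl; have flin : @is_linear K U K^o f by exact: fl.
  rewrite (eq_bigr (fun p => f p.1 *: x)) => [|p /eqP -> //].
  rewrite -scaler_suml; congr (_ *: _).
  by rewrite /A (lin_sumP _ _ _ flin).
have Hlr p : p \in lr -> p.2 \in X.
  rewrite mem_filter => /andP [px pl]; move: (Hl p pl).
  by rewrite in_cons (negbTE px).
pose SpanX (w : W) := exists s : seq (K * W),
  (forall q, q \in s -> q.2 \in X) /\ w = \sum_(q <- s) q.1 *: q.2.
case: (pselect (SpanX x)) => [[s [Hs Ex]]|nsp].
  pose l' := lr ++ [seq (q.1 *: A, q.2) | q <- s].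
  have Hsum : \sum_(p <- l) t p.1 p.2 = \sum_(p <- l') t p.1 p.2.
    rewrite splitl hx1 big_cat big_map /= addrC; congr (_ + _).
    rewrite Ex tsumr; apply: eq_bigr => q _.
    by rewrite tZ tZr.
  rewrite Hsum; apply: IH.
    move=> p; rewrite mem_cat => /orP [/Hlr //|/mapP [q qs ->]].
    exact: Hs.
  move=> f fl; rewrite -[RHS](Hf f fl) splitl (hx2 f fl) /l' big_cat big_map addrC.
  congr (_ + _); rewrite Ex scaler_sumr; apply: eq_bigr => q _ /=.
  by rewrite scalerA -[q.1 *: A]addr0 fl mulrC (lin0 (fl : @is_linear K U K^o f)) addr0.
have [|nu [nul nuS nux]] := @ext_functional K W SpanX x
   (ex_intro _ [::] (conj (fun q (H : q \in [::]) => False_ind _ (notF H))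
                         (esym (big_nil _ _ _ _)))) _ nsp.
  move=> a u v [s1 [Hs1 ->]] [s2 [Hs2 ->]].
  exists ([seq (a * q.1, q.2) | q <- s1] ++ s2); split.
    move=> q; rewrite mem_cat => /orP [/mapP [q' q's ->]|/Hs2 //].
    exact: (Hs1 q' q's).
  rewrite big_cat big_map scaler_sumr; congr (_ + _).
  by apply: eq_bigr => q _ /=; rewrite scalerA.
have nulin : @is_linear K W K^o nu by exact: nul.
have fA0 f : (forall a u v, f (a *: u + v) = a * f u + f v) -> f A = 0.
  move=> fl; have := Hf f fl; rewrite splitl (hx2 f fl) => /(congr1 nu).
  rewrite nul nux mulr1 (lin0 nulin).
  rewrite nuS ?addr0 //.
  exists [seq (f p.1, p.2) | p <- lr]; split.
    by move=> q /mapP [p plr ->]; exact: Hlr.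
  by rewrite big_map.
have A0 : A = 0.
  case: (pselect (A = 0)) => // nA.
  have [|f [fl fS fAe]] := @ext_functional K U (fun u => u = 0) A
     (erefl _) _ nA.
    by move=> a u v -> ->; rewrite scaler0 addr0.
  by move: (fA0 f fl); rewrite fAe => /eqP; rewrite oner_eq0.
have E : \sum_(p <- l) t p.1 p.2 = \sum_(p <- lr) t p.1 p.2.
  by rewrite splitl hx1 A0 t0w add0r.
rewrite E; apply: IH => // f fl.
by rewrite -[RHS](Hf f fl) splitl (hx2 f fl) (fA0 f fl) scale0r add0r.
Qed.

Lemma separation (K : fieldType) (U W T : lmodType K) (t : U -> W -> T) :
  is_tensor_product t -> forall x : T,
  (forall (f : U -> K) (F : T -> W), (forall a u v, f (a *: u + v) = a * f u + f v) ->
     is_linear F -> (forall u w, F (t u w) = f u *: w) -> F x = 0) -> x = 0.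
Proof.
move=> hT x Hx; have [l xl] := span_pure hT x; rewrite xl.
have [[tl tr] tu] := hT.
apply: (sep_seq (conj tl tr) (X := map snd l)) => [p pl|f fl]; first exact: map_f.
have bil : is_bilinear (fun (u : U) (w : W) => f u *: w).
  split => [w|u] a y z /=.
    by rewrite fl scalerDl scalerA.
  by rewrite scalerDr !scalerA mulrC.
have [F [[Fl Ft] _]] := tu W _ bil.
have := Hx f F fl Fl Ft; rewrite xl (lin_sum _ _ Fl).
by under eq_bigr do rewrite Ft.
Qed.

Lemma linN (K : fieldType) (V V' : lmodType K) (f : V -> V') u : is_linear f ->
  f (- u) = - f u.
Proof. by move=> H; rewrite -scaleN1r (linZ _ _ H) scaleN1r. Qed.

Close Scope classical_set_scope.
Unset Implicit Arguments.

Theorem lemma3p1 (K : fieldType) (hK : [pchar K] =i pred0)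
  (G : lmodType K) (br : G -> G -> G) (hG : is_lie_bracket br)
  (I : {pred G}) (hI : is_ideal br I)
  (U U' W : lmodType K)
  (actU : G -> U -> U) (actU' : G -> U' -> U') (actW : G -> W -> W)
  (hU : is_quotient_module br I actU) (hU' : is_quotient_module br I actU')
  (hW : is_lie_module br actW)
  (hdense : acts_densely I actW) (hirr : acts_irreducibly I actW)
  (hend : endI_scalar I actW)
  (T T' : lmodType K) (t : U -> W -> T) (t' : U' -> W -> T')
  (hT : is_tensor_product t) (hT' : is_tensor_product t')
  (actT : G -> T -> T) (actT' : G -> T' -> T')
  (hactT : is_tensor_action t actU actW actT)
  (hactT' : is_tensor_action t' actU' actW actT')
  (phi : T -> T') (hphi : is_module_hom actT actT' phi) :
  exists! g : U -> U',
    is_module_hom actU actU' g /\ forall u w, phi (t u w) = t' (g u) w.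
Proof.
have [[tl tr] tu] := hT; have [[t'l t'r] t'u] := hT'.
have [phil phih] := hphi; have [actTl actTh] := hactT; have [actT'l actT'h] := hactT'.
have [[Ul Ux _] UI] := hU; have [[U'l U'x _] U'I] := hU'; have [Wl Wx _] := hW.
have [[w0 w0n] _] := hirr.
have nw0 : w0 <> 0 by apply/eqP.
have [|mu [mul _ muw0]] := @ext_functional K W (fun w => w = 0) w0 (erefl _) _ nw0.
  by move=> a u v -> ->; rewrite scaler0 addr0.
have mulin : @is_linear K W K^o mu by exact: mul.
have bilmu : is_bilinear (fun (u : U') (w : W) => mu w *: u).
  split => [w|u] a y z /=.
    by rewrite scalerDr !scalerA mulrC.
  by rewrite mul scalerDl scalerA.
have [Gm [[Gml Gmt] _]] := t'u U' _ bilmu.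
pose g u := Gm (phi (t u w0)).
have t'inj a b : t' a w0 = t' b w0 -> a = b.
  by move/(congr1 Gm); rewrite !Gmt muw0 !scale1r.
have key u w : phi (t u w) = t' (g u) w.
  apply/eqP; rewrite -subr_eq0; apply/eqP.
  apply: (separation hT') => f F fl Fl Ft.
  have flin : @is_linear K U' K^o f by exact: fl.
  have Elin : is_linear (fun w => F (phi (t u w))) := lin_comp Fl (lin_comp phil (tr u)).
  have FI x tau : x \in I -> F (actT' x tau) = actW x (F tau).
    move=> xI.
    have E : (fun tau => F (actT' x tau)) = (fun tau => actW x (F tau)).
      apply: (text hT' (lin_comp Fl (actT'l x)) (lin_comp (Wx x) Fl)) => u' w' /=.
      rewrite actT'h (U'I x u' xI) (lin0 (t'l w')) add0r !Ft.
      by rewrite (linZ _ _ (Wx x)).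
    exact: (congr1 (fun h => h tau) E).
  have EI x w1 : x \in I -> F (phi (t u (actW x w1))) = actW x (F (phi (t u w1))).
    move=> xI; rewrite -FI // -phih actTh (UI x u xI) (lin0 (tl w1)) add0r //.
  have [c Hc] := hend _ Elin EI.
  have fg : f (g u) = c.
    have E1 : (fun tau => f (Gm tau)) = (fun tau => mu (F tau)) :> (T' -> K^o).
      apply: (text hT' (lin_comp flin Gml) (lin_comp mulin Fl)) => u' w'.
      rewrite Gmt Ft (linZ _ _ flin) (linZ _ _ mulin) /=.
      exact: (mulrC (mu w') (f u')).
    have := congr1 (fun h => h (phi (t u w0))) E1 => /= ->.
    rewrite Hc (linZ _ _ mulin) /= muw0.
    exact: (mulr1 c).
  by rewrite (linD _ _ Fl) (linN _ Fl) Hc Ft fg subrr.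
exists g; split.
  split => //; split.
    by move=> a u v; rewrite /g (tl w0) phil Gml.
  move=> x u; apply: t'inj.
  have := phih x (t u w0).
  by rewrite actTh (linD _ _ phil) !key actT'h => /addIr.
move=> g' [_ Hg']; apply: funext => u; apply: t'inj.
by rewrite -key -Hg'.
Qed.
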